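(* Let $\Delta$ be a noncommutative discrete valuation ring with uniformiser $\pi$ and finite residue field $k=\Delta/(\pi)$. Let $n,r\ge1$ and let $1\le c_1\le c_2\le\cdots\le c_r\le n$ be integers. For $i\in\{1,\ldots,n\}$ let $M_i\subseteq\Delta^{r}$ (row vectors) be the left $\Delta$-submodule of vectors whose $s$-th entry lies in $\Delta$ if $i\le c_s$ and in $\pi\Delta$ if $i>c_s$; thus $M_1=\Delta^r\supseteq M_2\supseteq\cdots\supseteq M_n\supseteq\pi M_1$. For a finite colength left $\Delta$-submodule $X\subseteq M_1$ let $M_j(X)=(X\cap M_j)/\pi X$ for $j=1,\ldots,n$ and $M_{n+1}(X)=0$, giving a filtered $k$-vector space $M_*X: M_1(X)\supseteq\cdots\supseteq M_n(X)\supseteq M_{n+1}(X)=0$. Let $X_1\subseteq M_1$ be a finite colength submodule and $Y_1=X_1+\pi M_1$. Then $M_*X_1\cong M_*Y_1$ as filtered vector spaces.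
   Context: A noncommutative discrete valuation ring is a domain $\Delta$ with a normal regular element $\pi$ (uniformiser) such that $\pi\Delta=\Delta\pi$ is the Jacobson radical and $\Delta/(\pi)$ is a division ring, here assumed finite (hence a finite field $k$). Since $\pi\Delta=\Delta\pi$, each $M_j(X)$ is a $k$-vector space. An isomorphism of filtered vector spaces $V_*\to V'_*$ is a $k$-linear isomorphism $V_1\to V'_1$ mapping each $V_j$ onto $V'_j$. *)

(* Defs.v *)
From HB Require Import structures.
From mathcomp Require Import all_boot all_order all_algebra.
Set Implicit Arguments. Unset Strict Implicit. Unset Printing Implicit Defensive.
Import GRing.Theory.
Local Open Scope ring_scope.

Section NCDVR.
Variable D : nzRingType.

Definition inpiD (pi x : D) : Prop := exists d, x = pi * d.

Record ncDVR (pi : D) : Prop := {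
  ncdvr_domain : forall a b : D, a * b = 0 -> a = 0 \/ b = 0;
  ncdvr_regular : forall a : D, (pi * a = 0 -> a = 0) /\ (a * pi = 0 -> a = 0);
  ncdvr_normal_l : forall a : D, exists b, pi * a = b * pi;
  ncdvr_normal_r : forall a : D, exists b, a * pi = pi * b;
  (* pi D is the Jacobson radical: x in J iff 1 - a x is left invertible for all a *)
  ncdvr_jacobson : forall x : D,
      inpiD pi x <-> (forall a : D, exists u : D, u * (1 - a * x) = 1);
  (* D/(pi) is a division ring: nonzero, and every nonzero class is invertible *)
  ncdvr_residue_nontrivial : ~ inpiD pi 1;
  ncdvr_residue_division : forall a : D, ~ inpiD pi a ->
      exists b : D, inpiD pi (b * a - 1) /\ inpiD pi (a * b - 1);
  ncdvr_residue_finite : exists s : seq D,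
      forall a : D, exists2 b, b \in s & inpiD pi (a - b)
}.

Variable r : nat.
Notation V := 'rV[D]_r.

Definition lsubmod (X : V -> Prop) : Prop :=
  [/\ X 0, (forall u v, X u -> X v -> X (u + v)) & (forall (a : D) u, X u -> X (a *: u))].

Definition finite_colength (X : V -> Prop) : Prop :=
  exists s : seq V, forall v : V, exists2 w, w \in s & X (v - w).

Definition piM (pi : D) (X : V -> Prop) : V -> Prop :=
  fun v => exists x, X x /\ v = pi *: x.

Definition add_piM1 (pi : D) (X : V -> Prop) : V -> Prop :=
  fun v => exists x w, X x /\ v = x + pi *: w.

Definition Mi (pi : D) (c : 'I_r -> nat) (i : nat) : V -> Prop :=
  fun v => forall s : 'I_r, (i <= c s)%N \/ inpiD pi (v ord0 s).

(* representatives x of X whose class in X / pi X lies in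
   M_j(X) = (X cap M_j) / pi X, i.e. x in (X cap M_j) + pi X *)
Definition in_Mj (pi : D) (c : 'I_r -> nat) (j : nat) (X : V -> Prop) : V -> Prop :=
  fun v => exists x y, [/\ X x, Mi pi c j x, piM pi X y & v = x + y].

(* An isomorphism of filtered k-vector spaces M_*X -> M_*Y, written on
   representatives: phi : X -> Y induces a well-defined, injective, surjective,
   additive, k-linear (k = D/(pi) acting through representatives in D) map
   X/piX -> Y/piY mapping each M_j(X) onto M_j(Y) (j = 1..n; M_{n+1} = 0). *)
Definition filtered_iso (pi : D) (n : nat) (c : 'I_r -> nat) (X Y : V -> Prop) : Prop :=
  exists phi : V -> V,
  (forall x, X x -> Y (phi x)) /\
  [/\
      (forall x x', X x -> X x' -> (piM pi X (x - x') <-> piM pi Y (phi x - phi x'))),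
      (forall x x', X x -> X x' -> piM pi Y (phi (x + x') - (phi x + phi x'))),
      (forall (a : D) x, X x -> piM pi Y (phi (a *: x) - a *: phi x)),
      (forall y, Y y -> exists2 x, X x & piM pi Y (y - phi x))
    & (forall j : nat, (1 <= j <= n)%N -> forall x, X x ->
         (in_Mj pi c j X x <-> in_Mj pi c j Y (phi x)))].

End NCDVR.

(* Main.v *)
Require Import Defs.
From HB Require Import structures.
From mathcomp Require Import all_boot all_order all_algebra.
From Stdlib Require Import Classical ClassicalEpsilon.
Set Implicit Arguments. Unset Strict Implicit.
Import GRing.Theory.
Local Open Scope ring_scope.

Section Main.
Variable D : nzRingType.
Variable pi : D.
Variable r : nat.
Notation V := 'rV[D]_r.
Hypothesis hD : ncDVR pi.

Lemma normr_ (a : D) : exists b, a * pi = pi * b.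
Proof. exact: (ncdvr_normal_r hD). Qed.

Lemma lsub0 (P : V -> Prop) : lsubmod P -> P 0.
Proof. by case. Qed.
Lemma lsubD (P : V -> Prop) u v : lsubmod P -> P u -> P v -> P (u + v).
Proof. by case=> _ H _; apply: H. Qed.
Lemma lsubZ (P : V -> Prop) a u : lsubmod P -> P u -> P (a *: u).
Proof. by case=> _ _ H; apply: H. Qed.
Lemma lsubN (P : V -> Prop) u : lsubmod P -> P u -> P (- u).
Proof. by move=> hP hu; rewrite -scaleN1r; apply: lsubZ. Qed.
Lemma lsubB (P : V -> Prop) u v : lsubmod P -> P u -> P v -> P (u - v).
Proof. by move=> hP hu hv; apply: lsubD => //; apply: lsubN. Qed.
Lemma lsubBC (P : V -> Prop) u v : lsubmod P -> P (u - v) -> P (v - u).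
Proof. by move=> hP h; rewrite -opprB; apply: lsubN. Qed.
Lemma lsubBT (P : V -> Prop) u v w : lsubmod P -> P (u - v) -> P (v - w) -> P (u - w).
Proof.
by move=> hP h1 h2; have := lsubD hP h1 h2; rewrite addrA subrK.
Qed.

Lemma lsubT : lsubmod (fun _ : V => True).
Proof. by split. Qed.

Lemma lsub_piM (P : V -> Prop) : lsubmod P -> lsubmod (piM pi P).
Proof.
move=> hP; split.
- by exists 0; split; [apply: lsub0 | rewrite scaler0].
- move=> u v [x [hx ->]] [y [hy ->]]; exists (x + y); split.
    exact: lsubD. by rewrite scalerDr.
- move=> a u [x [hx ->]]; have [b hb] := normr_ a.
  exists (b *: x); split; first exact: lsubZ.
  by rewrite !scalerA hb.
Qed.

Lemma piM_sub (P Q : V -> Prop) : (forall v, P v -> Q v) -> forall v, piM pi P v -> piM pi Q v.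
Proof. by move=> h v [x [hx ->]]; exists x; split => //; apply: h. Qed.


Definition count (A E : V -> Prop) (T : finType) (f : T -> V) : Prop :=
  [/\ forall t, A (f t), forall t t', E (f t - f t') -> t = t'
    & forall a, A a -> exists t, E (a - f t)].

Lemma count_list (A E : V -> Prop) : lsubmod E -> forall s : seq V,
  exists l : seq V, [/\ forall i, (i < size l)%N -> A (nth 0 l i),
    forall i j, (i < size l)%N -> (j < size l)%N -> E (nth 0 l i - nth 0 l j) -> i = j
    & forall a, A a -> (exists2 w, w \in s & E (a - w)) ->
        exists2 i, (i < size l)%N & E (a - nth 0 l i)].
Proof.
move=> hE; elim=> [|w s [l [lA lI lC]]].
  by exists [::]; split => // a _ [w].
case: (classic (exists a, [/\ A a, E (a - w) &
          forall i, (i < size l)%N -> ~ E (a - nth 0 l i)])).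
- move=> [a [Aa Eaw Hn]]; exists (rcons l a); split.
  + move=> i; rewrite size_rcons ltnS nth_rcons.
    case: ltngtP => [hi _|//|e _]; [exact: lA | by subst i].
  + move=> i j; rewrite !size_rcons !ltnS !nth_rcons.
    case: (ltngtP i (size l)) => [hi _|//|ei _]; case: (ltngtP j (size l)) => [hj _|//|ej _];
      rewrite ?ei ?ej ?eqxx //.
    * exact: lI.
    * by move=> h; exfalso; apply: (Hn i hi); apply: lsubBC.
    * by move=> h; exfalso; apply: (Hn j hj).
  + move=> b Ab [w' hw' Ebw]; move: hw'; rewrite inE => /orP [/eqP ew|hw'].
    * exists (size l); first by rewrite size_rcons.
      rewrite nth_rcons ltnn eqxx; subst w'.
      by apply: (lsubBT hE Ebw); apply: lsubBC.
    * have [i hi Ei] := lC b Ab (ex_intro2 _ _ w' hw' Ebw).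
      by exists i; rewrite ?size_rcons ?nth_rcons ?hi // ltnS ltnW.
- move=> Hno; exists l; split => // b Ab [w' hw' Ebw]; move: hw'; rewrite inE => /orP [/eqP ew|hw'].
  + subst w'; apply: NNPP => Hn; apply: Hno; exists b; split => // i hi Ei.
    by apply: Hn; exists i.
  + exact: lC b Ab (ex_intro2 _ _ w' hw' Ebw).
Qed.

Lemma count_exists (A E : V -> Prop) : lsubmod E ->
  (exists s : seq V, forall v, exists2 w, w \in s & E (v - w)) ->
  exists (T : finType) (f : T -> V), count A E f.
Proof.
move=> hE [s hs]; have [l [lA lI lC]] := count_list A hE s.
exists 'I_(size l), (fun i => nth 0 l (val i)); split.
- by move=> i; exact: lA (ltn_ord i).
- by move=> i j h; apply: val_inj; apply: lI (ltn_ord i) (ltn_ord j) h.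
- move=> a Aa; have [i hi Ei] := lC a Aa (hs a).
  by exists (Ordinal hi).
Qed.

Lemma count_card (A E : V -> Prop) (T1 T2 : finType) (f1 : T1 -> V) (f2 : T2 -> V) :
  lsubmod E -> count A E f1 -> count A E f2 -> #|T1| = #|T2|.
Proof.
move=> hE.
suff H : forall (T1 T2 : finType) (f1 : T1 -> V) (f2 : T2 -> V),
    count A E f1 -> count A E f2 -> (#|T1| <= #|T2|)%N.
  by move=> c1 c2; apply/eqP; rewrite eqn_leq !(H _ _ _ _ c1 c2) ?(H _ _ _ _ c2 c1).
move=> U1 U2 g1 g2 [A1 I1 C1] [A2 I2 C2].
pose g t := proj1_sig (constructive_indefinite_description _ (C2 _ (A1 t))).
have gP t : E (g1 t - g2 (g t)) by rewrite /g; case: constructive_indefinite_description.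
apply: (@leq_card _ _ g) => t t' e; apply: I1.
apply: (lsubBT hE (gP t)); rewrite e; apply: lsubBC => //; exact: gP.
Qed.

Lemma count_tower (A B C : V -> Prop) (T1 T2 : finType) (f1 : T1 -> V) (f2 : T2 -> V) :
  lsubmod A -> lsubmod B -> lsubmod C -> (forall v, C v -> B v) -> (forall v, B v -> A v) ->
  count A B f1 -> count B C f2 ->
  count A C (fun p : T1 * T2 => f1 p.1 + f2 p.2).
Proof.
move=> hA hB hC CB BA [A1 I1 C1] [A2 I2 C2]; split.
- by move=> [t1 t2] /=; apply: lsubD => //; apply: BA.
- move=> [t1 t2] [t1' t2'] /=; rewrite opprD addrACA => h.
  have e1 : t1 = t1'.
    apply: I1; have := lsubB hB (CB _ h) (lsubB hB (A2 t2) (A2 t2')).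
    by rewrite addrK.
  subst t1'; congr (_, _); apply: I2.
  by move: h; rewrite subrr add0r.
- move=> a Aa; have [t1 e1] := C1 a Aa; have [t2 e2] := C2 _ e1.
  by exists (t1, t2); move: e2; rewrite /= opprD addrA.
Qed.

Lemma count_transport (A E A' E' : V -> Prop) (T : finType) (f : T -> V) (h : V -> V) :
  lsubmod E' -> (forall a, A a -> A' (h a)) ->
  (forall a a', A a -> A a' -> (E (a - a') <-> E' (h a - h a'))) ->
  (forall a', A' a' -> exists a, A a /\ E' (a' - h a)) ->
  count A E f -> count A' E' (fun t => h (f t)).
Proof.
move=> hE' hA hI hS [A1 I1 C1]; split.
- by move=> t; apply: hA.
- by move=> t t' e; apply: I1; apply/(hI _ _ (A1 t) (A1 t')).
- move=> a' Aa'; have [a [Aa e]] := hS a' Aa'; have [t et] := C1 a Aa.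
  exists t; apply: (lsubBT hE' e); apply/(hI _ _ Aa (A1 t)) => //.
Qed.

Lemma pigeon (A1 E1 A2 E2 : V -> Prop) (T1 T2 : finType) (f1 : T1 -> V) (f2 : T2 -> V)
  (R : V -> V -> Prop) :
  lsubmod E1 -> lsubmod E2 -> count A1 E1 f1 -> count A2 E2 f2 -> #|T1| = #|T2| ->
  (forall x y, R x y -> A2 y) ->
  (forall x y x' y', R x y -> R x' y' -> E2 (y - y') -> E1 (x - x')) ->
  (forall a, A1 a -> exists y, R a y) ->
  forall b, A2 b -> exists x y, R x y /\ E2 (b - y).
Proof.
move=> hE1 hE2 [A1' I1 C1] [A2' I2 C2] hc RA RI Rt b Ab.
pose y t := proj1_sig (constructive_indefinite_description _ (Rt _ (A1' t))).
have yP t : R (f1 t) (y t) by rewrite /y; case: constructive_indefinite_description.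
pose g t := proj1_sig (constructive_indefinite_description _ (C2 _ (RA _ _ (yP t)))).
have gP t : E2 (y t - f2 (g t)) by rewrite /g; case: constructive_indefinite_description.
have ginj : injective g.
  move=> t t' e; apply: I1; apply: RI (yP t) (yP t') _.
  apply: (lsubBT hE2 (gP t)); rewrite e; apply: lsubBC => //; exact: gP.
have [t2 e2] := C2 b Ab.
have /codomP [t et] : t2 \in codom g by apply: inj_card_onto => //; rewrite hc.
rewrite et in e2.
exists (f1 t), (y t); split => //.
apply: (lsubBT hE2 e2); apply: lsubBC => //; exact: gP.
Qed.

Variable X : V -> Prop.
Hypothesis hX : lsubmod X.
Hypothesis hfin : finite_colength X.

Notation Y := (add_piM1 pi X).
Notation pX := (piM pi X).
Notation pY := (piM pi Y).
Notation Pm := (piM pi (fun _ : V => True)).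

Lemma lsubY : lsubmod Y.
Proof.
split.
- by exists 0, 0; split; [apply: lsub0 | rewrite scaler0 addr0].
- move=> u v [x [w [hx ->]]] [x' [w' [hx' ->]]]; exists (x + x'), (w + w'); split.
    exact: lsubD. by rewrite scalerDr addrACA.
- move=> a u [x [w [hx ->]]]; have [b hb] := normr_ a.
  exists (a *: x), (b *: w); split; first exact: lsubZ.
  by rewrite scalerDr !scalerA hb.
Qed.

Lemma lsubpX : lsubmod pX. Proof. exact: lsub_piM. Qed.
Lemma lsubpY : lsubmod pY. Proof. exact: lsub_piM lsubY. Qed.
Lemma lsubPm : lsubmod Pm. Proof. exact: lsub_piM lsubT. Qed.

Lemma XY v : X v -> Y v.
Proof. by move=> h; exists v, 0; rewrite scaler0 addr0. Qed.
Lemma PmY v : Pm v -> Y v.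
Proof. by move=> [w [_ ->]]; exists 0, w; rewrite add0r; split => //; apply: lsub0. Qed.
Lemma pXX v : pX v -> X v.
Proof. by move=> [x [hx ->]]; apply: lsubZ. Qed.
Lemma pYY v : pY v -> Y v.
Proof. by move=> [x [hx ->]]; apply: (lsubZ _ lsubY). Qed.
Lemma pXPm v : pX v -> Pm v.
Proof. by apply: piM_sub. Qed.
Lemma pYPm v : pY v -> Pm v.
Proof. by apply: piM_sub. Qed.
Lemma pXpY v : pX v -> pY v.
Proof. by apply: piM_sub; exact: XY. Qed.


Lemma cover_Pm : exists s : seq V, forall v, exists2 w, w \in s & Pm (v - w).
Proof.
have [s0 hs0] := ncdvr_residue_finite hD.
exists (map (fun g : {ffun 'I_r -> 'I_(size s0)} => \row_j nth 0 s0 (g j) : V)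
  (enum {ffun 'I_r -> 'I_(size s0)})) => v.
have H : forall j : 'I_r, exists (i : 'I_(size s0)) (d : D), v 0 j - nth 0 s0 i = pi * d.
  move=> j; have [b hb [d hd]] := hs0 (v 0 j).
  have hi : (index b s0 < size s0)%N by rewrite index_mem.
  by exists (Ordinal hi), d; rewrite /= nth_index.
pose gi j := proj1_sig (constructive_indefinite_description _ (H j)).
have gP j : exists d, v 0 j - nth 0 s0 (gi j) = pi * d.
  by rewrite /gi; case: constructive_indefinite_description.
pose gd j := proj1_sig (constructive_indefinite_description _ (gP j)).
have gdP j : v 0 j - nth 0 s0 (gi j) = pi * gd j.
  by rewrite /gd; case: constructive_indefinite_description.
exists (\row_j nth 0 s0 ([ffun j => gi j] j)).
  by apply: map_f; rewrite mem_enum.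
exists (\row_j gd j); split => //; apply/rowP => j; rewrite !mxE ffunE.
by rewrite gdP.
Qed.

Lemma cover_pX : exists s : seq V, forall v, exists2 w, w \in s & pX (v - w).
Proof.
have [s2 hs2] := cover_Pm; have [s1 hs1] := hfin.
exists [seq t + pi *: w1 | t <- s2, w1 <- s1] => v.
have [t ht [m [_ hm]]] := hs2 v; have [w1 hw1 Xw] := hs1 m.
exists (t + pi *: w1); first exact: allpairs_f.
exists (m - w1); split => //.
by rewrite scalerBr -hm opprD addrA.
Qed.


Lemma pi_inj (u w : V) : pi *: u = pi *: w -> u = w.
Proof.
move=> h; apply/rowP => j; have := congr1 (fun M : V => M 0 j) h; rewrite !mxE => e.
apply/eqP; rewrite -subr_eq0; apply/eqP; apply: (proj1 (ncdvr_regular hD _)).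
by rewrite mulrBr e subrr.
Qed.

Definition Bm v := X v /\ Pm v.

Lemma lsubBm : lsubmod Bm.
Proof.
split.
- by split; apply: lsub0 => //; apply: lsubPm.
- by move=> u v [? ?] [? ?]; split; apply: lsubD => //; apply: lsubPm.
- by move=> a u [? ?]; split; apply: lsubZ => //; apply: lsubPm.
Qed.

Lemma cover_sup (E : V -> Prop) : (forall v, pX v -> E v) ->
  exists s : seq V, forall v, exists2 w, w \in s & E (v - w).
Proof.
move=> h; have [s hs] := cover_pX; exists s => v.
by have [w ? ?] := hs v; exists w => //; apply: h.
Qed.

Lemma card_eq (T1 T2 : finType) (f1 : T1 -> V) (f2 : T2 -> V) :
  count Bm pX f1 -> count Pm pY f2 -> #|T1| = #|T2|.
Proof.
move=> c1 c2.
have [TAB [fAB cAB]] := count_exists Pm lsubBm (cover_sup (fun v h => conj (pXX h) (pXPm h))).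
have [TEC [fEC cEC]] := count_exists pY lsubpX (cover_sup (fun v h => h)).
have t1 := count_tower lsubPm lsubBm lsubpX (fun v h => conj (pXX h) (pXPm h))
   (fun v h => proj2 h) cAB c1.
have t2 := count_tower lsubPm lsubpY lsubpX pXpY pYPm c2 cEC.
have e1 := count_card lsubpX t1 t2; rewrite !card_prod in e1.
have tr : count pY pX (fun t => pi *: fAB t).
  apply: count_transport cAB => //.
  - exact: lsubpX.
  - move=> a [w [_ ->]]; exists (0 + pi *: w); split; last by rewrite add0r.
    by exists 0, w; split => //; apply: lsub0.
  - move=> a a' Pa Pa'; rewrite -scalerBr; split.
      by move=> [Xa _]; exists (a - a').
    move=> [x [Xx /pi_inj e]]; rewrite e; split => //.
    by rewrite -e; apply: lsubB => //; apply: lsubPm.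
  - move=> a' [y [[x [w [Xx ->]]] ->]]; exists (pi *: w); split; first by exists w.
    by exists x; split => //; rewrite scalerDr addrK.
have e2 := count_card lsubpX tr cEC.
have pos : (0 < #|TAB|)%N.
  case: cAB => _ _ /(_ 0 (lsub0 lsubPm)) [t _].
  by apply/card_gt0P; exists t.
move: e1; rewrite -e2 mulnC => /eqP; rewrite eqn_pmul2r // => /eqP.
done.
Qed.


Definition Inv (R : V -> V -> Prop) :=
  [/\ (forall x y, R x y -> [/\ X x, Y y & Pm (y - x)]),
      (forall x y x' y', R x y -> R x' y' -> (pX (x - x') <-> pY (y - y'))),
      (forall x y x' y', R x y -> R x' y' -> R (x + x') (y + y')),
      (forall a x y, R x y -> R (a *: x) (a *: y))
    & (forall x y, pX x -> pY y -> R x y)].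

Section InvR.
Variable R : V -> V -> Prop.
Hypothesis hR : Inv R.

Lemma RP x y : R x y -> [/\ X x, Y y & Pm (y - x)].
Proof. by case: hR => H _ _ _ _; apply: H. Qed.
Lemma RI x y x' y' : R x y -> R x' y' -> (pX (x - x') <-> pY (y - y')).
Proof. by case: hR => _ H _ _ _; apply: H. Qed.
Lemma RD x y x' y' : R x y -> R x' y' -> R (x + x') (y + y').
Proof. by case: hR => _ _ H _ _; apply: H. Qed.
Lemma RZ a x y : R x y -> R (a *: x) (a *: y).
Proof. by case: hR => _ _ _ H _; apply: H. Qed.
Lemma R0 x y : pX x -> pY y -> R x y.
Proof. by case: hR => _ _ _ _ H; apply: H. Qed.
Lemma RN x y : R x y -> R (- x) (- y).
Proof. by move=> h; rewrite -!scaleN1r; apply: RZ. Qed.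
Lemma RB x y x' y' : R x y -> R x' y' -> R (x - x') (y - y').
Proof. by move=> h h'; apply: RD h (RN h'). Qed.
Lemma R00 : R 0 0.
Proof. by apply: R0; apply: lsub0; [apply: lsubpX | apply: lsubpY]. Qed.
Lemma RpX x y : R x y -> pX x <-> pY y.
Proof. by move=> h; have := RI h R00; rewrite !subr0. Qed.
End InvR.

Lemma Inv0 : Inv (fun x y => pX x /\ pY y).
Proof.
split.
- move=> x y [hx hy]; split; [exact: pXX | exact: pYY |].
  by apply: lsubB; [apply: lsubPm | apply: pYPm | apply: pXPm].
- by move=> x y x' y' [? ?] [? ?]; split => _; [apply: (lsubB lsubpY) | apply: (lsubB lsubpX)].
- by move=> x y x' y' [? ?] [? ?]; split; [apply: (lsubD lsubpX) | apply: (lsubD lsubpY)].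
- by move=> a x y [? ?]; split; [apply: (lsubZ _ lsubpX) | apply: (lsubZ _ lsubpY)].
- by move=> x y; split.
Qed.

Lemma Pm_chain u v w : Pm (u - v) -> Pm (v - w) -> Pm (u - w).
Proof. exact: lsubBT lsubPm. Qed.

Lemma extend (R : V -> V -> Prop) v v' : Inv R -> X v -> Y v' -> Pm (v' - v) ->
  (forall a x y, R x y -> (pX (a *: v + x) <-> pY (a *: v' + y))) ->
  let R' := fun x y => exists a x0 y0, [/\ R x0 y0, x = x0 + a *: v & y = y0 + a *: v'] in
  [/\ Inv R', forall x y, R x y -> R' x y & R' v v'].
Proof.
move=> hR Xv Yv' Pv hv R'; split.
- split.
  + move=> x y [a [x0 [y0 [h -> ->]]]]; have [Xx Yy Pyx] := RP hR h; split.
    * exact: (lsubD hX Xx (lsubZ a hX Xv)).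
    * exact: (lsubD lsubY Yy (lsubZ a lsubY Yv')).
    * rewrite opprD addrACA -scalerBr; exact: (lsubD lsubPm Pyx (lsubZ a lsubPm Pv)).
  + move=> x y x' y' [a [x0 [y0 [h -> ->]]]] [a' [x0' [y0' [h' -> ->]]]].
    have e1 : x0 + a *: v - (x0' + a' *: v) = (a - a') *: v + (x0 - x0').
      by rewrite scalerBl opprD addrACA addrC.
    have e2 : y0 + a *: v' - (y0' + a' *: v') = (a - a') *: v' + (y0 - y0').
      by rewrite scalerBl opprD addrACA addrC.
    rewrite e1 e2; exact: (hv (a - a') _ _ (RB hR h h')).
  + move=> x y x' y' [a [x0 [y0 [h -> ->]]]] [a' [x0' [y0' [h' -> ->]]]].
    exists (a + a'), (x0 + x0'), (y0 + y0'); split. exact (RD hR h h').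
      by rewrite addrACA scalerDl.
    by rewrite addrACA scalerDl.
  + move=> b x y [a [x0 [y0 [h -> ->]]]]; exists (b * a), (b *: x0), (b *: y0).
    split. exact (RZ hR b h).
      by rewrite scalerDr scalerA.
    by rewrite scalerDr scalerA.
  + move=> x y hx hy; exists 0, x, y; split. exact (R0 hR hx hy).
      by rewrite scale0r addr0.
    by rewrite scale0r addr0.
- by move=> x y h; exists 0, x, y; split => //; rewrite scale0r addr0.
- exists 1, 0, 0; split. exact (R00 hR).
    by rewrite add0r scale1r.
  by rewrite add0r scale1r.
Qed.


Lemma piZ (P : V -> Prop) u d : lsubmod P -> P u -> piM pi P ((pi * d) *: u).
Proof. by move=> hP hu; exists (d *: u); split; [apply: lsubZ | rewrite scalerA]. Qed.

Lemma inv_trick (Q : V -> Prop) u z a : lsubmod Q -> (forall d, Q ((pi * d) *: u)) ->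
  ~ inpiD pi a -> Q (a *: u + z) -> exists b, Q (u + b *: z).
Proof.
move=> hQ hZ na h; have [b [[d hd] _]] := ncdvr_residue_division hD na.
exists b; have := lsubB hQ (lsubZ b hQ h) (hZ d).
have e : b * a = 1 + pi * d by rewrite -hd addrCA subrr addr0.
by rewrite scalerDr scalerA e scalerDl scale1r addrAC addrK.
Qed.

Lemma inpi_scale (P : V -> Prop) a u : lsubmod P -> inpiD pi a -> P u -> piM pi P (a *: u).
Proof. by move=> hP [d ->] hu; apply: piZ. Qed.

Lemma core R u u' : Inv R -> X u -> ~ (exists y, R u y) -> Y u' -> ~ (exists x, R x u') ->
  forall a x2 y2, R x2 y2 -> (pX (a *: u + x2) <-> pY (a *: u' + y2)).
Proof.
move=> hR Xu nSu Yu' nIu' a x2 y2 h.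
case: (classic (inpiD pi a)) => ha.
- have pau : pX (a *: u) := inpi_scale hX ha Xu.
  have pau' : pY (a *: u') := inpi_scale lsubY ha Yu'.
  split => H.
  + have px2 : pX x2.
      by have := lsubB lsubpX H pau; rewrite [a *: u + x2]addrC addrK.
    exact: (lsubD lsubpY pau' ((RpX hR h).1 px2)).
  + have py2 : pY y2.
      by have := lsubB lsubpY H pau'; rewrite [a *: u' + y2]addrC addrK.
    exact: (lsubD lsubpX pau ((RpX hR h).2 py2)).
- split => H; exfalso.
  + have [b hb] := inv_trick lsubpX (fun d => piZ d hX Xu) ha H.
    apply: nSu; exists (0 - b *: y2).
    have := RB hR (R0 hR hb (lsub0 lsubpY)) (RZ hR b h).
    by rewrite addrK.
  + have [b hb] := inv_trick lsubpY (fun d => piZ d lsubY Yu') ha H.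
    apply: nIu'; exists (0 - b *: x2).
    have := RB hR (R0 hR (lsub0 lsubpX) hb) (RZ hR b h).
    by rewrite addrK.
Qed.

Lemma choose_v R v : Inv R -> X v -> exists v', [/\ Y v', Pm (v' - v) &
  forall a x y, R x y -> (pX (a *: v + x) <-> pY (a *: v' + y))].
Proof.
move=> hR Xv.
case: (classic (exists y, R v y)) => [[y hy] | nS].
  have [_ Yy Pyv] := RP hR hy.
  exists y; split => // a x1 y1 h1.
  by have := RI hR (RD hR (RZ hR a hy) h1) (R00 hR); rewrite !subr0.
case: (classic (exists x0 y0, R x0 y0 /\ Pm (v - x0))) => [[x0 [y0 [h0 P0]]] | n2].
- have [Xx0 Yy0 Pyx0] := RP hR h0.
  pose u := v - x0.
  have Xu : X u := lsubB hX Xv Xx0.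
  have nSu : ~ (exists y, R u y).
    move=> [y hy]; apply: nS; exists (y + y0).
    by have := RD hR hy h0; rewrite /u subrK.
  have [u' [Pu' nIu']] : exists u', Pm u' /\ ~ (exists x, R x u').
    apply: NNPP => Hn; exfalso.
    have Rt : forall a, Pm a -> exists x, R x a /\ Pm a.
      move=> a Pa; apply: NNPP => Hn2; apply: Hn; exists a; split => // [[x hx]].
      by apply: Hn2; exists x.
    have [T1 [f1 c1]] := count_exists Pm lsubpY (cover_sup pXpY).
    have [T2 [f2 c2]] := count_exists Bm lsubpX (cover_sup (fun v h => h)).
    have hc := card_eq c2 c1.
    have RA : forall y x, R x y /\ Pm y -> Bm x.
      move=> y x [hxy Py]; have [Xx _ Pyx] := RP hR hxy; split => //.
      by have := lsubB lsubPm Py Pyx; rewrite opprB addrCA subrr addr0.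
    have RI' : forall y x y' x', R x y /\ Pm y -> R x' y' /\ Pm y' -> pX (x - x') -> pY (y - y').
      by move=> y x y' x' [h _] [h' _]; apply: (RI hR h h').1.
    have [y [x [[hxy _] ex]]] := pigeon (R := fun y x => R x y /\ Pm y)
       lsubpY lsubpX c1 c2 (esym hc) RA RI' Rt (conj Xu P0).
    apply: nSu; exists (0 + y).
    by have := RD hR (R0 hR ex (lsub0 lsubpY)) hxy; rewrite subrK.
  exists (y0 + u'); split.
  + exact: (lsubD lsubY Yy0 (PmY Pu')).
  + apply: (Pm_chain (v := y0)); first by rewrite [y0 + u']addrC addrK.
    by apply: (Pm_chain Pyx0); apply: (lsubBC lsubPm P0).
  + move=> a x1 y1 h1.
    have := core hR Xu nSu (PmY Pu') nIu' a (RD hR (RZ hR a h0) h1).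
    have -> : a *: u + (a *: x0 + x1) = a *: v + x1 by rewrite /u scalerBr addrA subrK.
    by have -> : a *: u' + (a *: y0 + y1) = a *: (y0 + u') + y1 by rewrite scalerDr -addrA addrCA.
- exists v; split; first exact: XY.
    by rewrite subrr; apply: (lsub0 lsubPm).
  move=> a x1 y1 h1; have [Xx1 Yy1 Pyx] := RP hR h1.
  case: (classic (inpiD pi a)) => ha.
  + have pav : pX (a *: v) := inpi_scale hX ha Xv.
    have pav' : pY (a *: v) := pXpY pav.
    split => H.
    * have px1 : pX x1.
        by have := lsubB lsubpX H pav; rewrite [a *: v + x1]addrC addrK.
      exact: (lsubD lsubpY pav' ((RpX hR h1).1 px1)).
    * have py1 : pY y1.
        by have := lsubB lsubpY H pav'; rewrite [a *: v + y1]addrC addrK.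
      exact: (lsubD lsubpX pav ((RpX hR h1).2 py1)).
  + have fin : forall b, Pm (v + b *: x1) -> False.
      move=> b hb; apply: n2; exists (- (b *: x1)), (- (b *: y1)); split.
        exact: (RN hR (RZ hR b h1)).
      by rewrite opprK.
    split => H; exfalso.
    * have [b hb] := inv_trick lsubpX (fun d => piZ d hX Xv) ha H.
      exact: (fin b (pXPm hb)).
    * have H' : Pm (a *: v + x1).
        by have := lsubB lsubPm (pYPm H) Pyx; rewrite opprB addrA addrAC addrK.
      have [b hb] := inv_trick lsubPm (fun d => piZ d lsubT I) ha H'.
      exact: (fin b hb).
Qed.

Lemma build (l : seq V) : (forall x, x \in l -> X x) ->
  exists R, Inv R /\ forall x, x \in l -> exists y, R x y.
Proof.
elim: l => [_|v l IH hl].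
  by exists (fun x y => pX x /\ pY y); split; [exact: Inv0 | ].
have [R [hR hS]] : exists R, Inv R /\ forall x, x \in l -> exists y, R x y.
  by apply: IH => x hx; apply: hl; rewrite inE hx orbT.
have Xv : X v by apply: hl; rewrite inE eqxx.
have [v' [Yv' Pv hv]] := choose_v hR Xv.
move: (extend hR Xv Yv' Pv hv) => /= [hR' sub vin].
eexists; split; first exact: hR'.
move=> x; rewrite inE => /orP [/eqP -> | hx]; first by exists v'.
by have [y hy] := hS x hx; exists y; apply: sub.
Qed.

Lemma Mi_Pm c j (v w : V) : Pm (v - w) -> Mi pi c j w -> Mi pi c j v.
Proof.
move=> [m [_ e]] hw s; case: (hw s) => [h|[d hd]]; [by left | right].
have := congr1 (fun M : V => M ord0 s) e; rewrite !mxE => e'.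
exists (d + m ord0 s); rewrite mulrDr -hd -e'.
by rewrite [w ord0 s + _]addrC subrK.
Qed.

Lemma inMj_iff (Z : V -> Prop) c j x : lsubmod Z -> (forall v, piM pi Z v -> Pm v) -> Z x ->
  (in_Mj pi c j Z x <-> Mi pi c j x).
Proof.
move=> hZ hZP Zx; split.
- move=> [x1 [y1 [Zx1 M1 py ->]]]; apply: (Mi_Pm (w := x1)) => //.
  by rewrite [x1 + y1]addrC addrK; apply: hZP.
- move=> hM; exists x, 0; split => //; last by rewrite addr0.
  exact: (lsub0 (lsub_piM hZ)).
Qed.

Lemma main_iso n c : filtered_iso pi n c X Y.
Proof.
have [T [f [fX fI fC]]] := count_exists X lsubpX (cover_sup (fun v h => h)).
have [R [hR hS]] := build (l := map f (enum T)) (fun x hx => match (mapP hx) with ex_intro2 t _ e => ltac:(rewrite e; exact: fX) end).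
have SX : forall x, X x -> exists y, R x y.
  move=> x Xx; have [t et] := fC x Xx; have [y hy] := hS (f t) (map_f _ (mem_enum _ _)).
  exists (0 + y); have := RD hR (R0 hR et (lsub0 lsubpY)) hy; by rewrite subrK.
pose phi x := epsilon (inhabits (0 : V)) (fun y => R x y).
have phiP x : X x -> R x (phi x) := fun Xx => epsilon_spec _ _ (SX x Xx).
have pX0 : pX 0 := lsub0 lsubpX.
exists phi; split.
  by move=> x Xx; case: (RP hR (phiP x Xx)).
split.
- by move=> x x' Xx Xx'; exact: (RI hR (phiP x Xx) (phiP x' Xx')).
- move=> x x' Xx Xx'; have h := RD hR (phiP x Xx) (phiP x' Xx').
  have := (RI hR (phiP _ (lsubD hX Xx Xx')) h).1; rewrite subrr; exact.
- move=> a x Xx; have h := RZ hR a (phiP x Xx).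
  have := (RI hR (phiP _ (lsubZ a hX Xx)) h).1; rewrite subrr; exact.
- move=> y [x0 [w [Xx0 ->]]].
  have [T1 [f1 c1]] := count_exists Bm lsubpX (cover_sup (fun v h => h)).
  have [T2 [f2 c2]] := count_exists Pm lsubpY (cover_sup pXpY).
  have RA : forall x y, R x y /\ Bm x -> Pm y.
    move=> x1 y1 [h [_ Px]]; have [_ _ Pyx] := RP hR h.
    by have := lsubD lsubPm Pyx Px; rewrite subrK.
  have RI' : forall x y x' y', R x y /\ Bm x -> R x' y' /\ Bm x' -> pY (y - y') -> pX (x - x').
    by move=> ? ? ? ? [h _] [h' _]; apply: (RI hR h h').2.
  have Rt : forall a, Bm a -> exists y, R a y /\ Bm a.
    by move=> a [Xa Pa]; have [y2 hy] := SX a Xa; exists y2.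
  have Pz : Pm (x0 + pi *: w - phi x0).
    apply: (Pm_chain (v := x0)).
      by rewrite [x0 + _]addrC addrK; exists w.
    by apply: (lsubBC lsubPm); case: (RP hR (phiP x0 Xx0)).
  have [x1 [y1 [[h1 [Xx1 _]] e1]]] := pigeon (R := fun x y => R x y /\ Bm x)
     lsubpX lsubpY c1 c2 (card_eq c1 c2) RA RI' Rt Pz.
  have Xs : X (x0 + x1) := lsubD hX Xx0 Xx1.
  exists (x0 + x1) => //.
  have hsum := RD hR (phiP x0 Xx0) h1.
  have e2 := (RI hR (phiP _ Xs) hsum).1 (eq_ind_r pX pX0 (subrr _)).
  have e1' : pY (x0 + pi *: w - (phi x0 + y1)) by rewrite opprD addrA.
  exact: (lsubBT lsubpY e1' (lsubBC lsubpY e2)).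
- move=> j _ x Xx; have [_ Yp Pp] := RP hR (phiP x Xx).
  rewrite (inMj_iff c j hX pXPm Xx) (inMj_iff c j lsubY pYPm Yp).
  split; apply: Mi_Pm => //; exact: (lsubBC lsubPm).
Qed.

End Main.

Theorem propositionB2 (D : nzRingType) (pi : D) (n r : nat) (c : 'I_r -> nat)
  (X1 : 'rV[D]_r -> Prop) :
  ncDVR pi ->
  (1 <= n)%N -> (1 <= r)%N ->
  (forall s : 'I_r, (1 <= c s <= n)%N) ->
  (forall s t : 'I_r, (s <= t)%N -> (c s <= c t)%N) ->
  lsubmod X1 -> finite_colength X1 ->
  filtered_iso pi n c X1 (add_piM1 pi X1).
Proof.
by move=> hD _ _ _ _ hX hfin; apply: main_iso.
Qed.
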